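(* Let $X,Y\subset\mathbf{N}$ be two $n$-element sets, $f:X\to Y$ a bijection, and $\pi\in S_n$ the permutation order-isomorphic to $f$. Suppose $\pi\in H_k^+\cup H_k^-$ for some $k\in\mathbf{N}$. Then every partition of $X$ into intervals $J_1<J_2<\dots<J_r$ can be refined by a partition of $X$ into intervals $I_1<I_2<\dots<I_s$ such that $s\le r+(k-1)(r-1)$ and each image $f(I_i)$ is an interval in $Y$. Similarly, every partition of $Y$ into $r$ intervals can be refined by a partition of $Y$ into at most $r+(k-1)(r-1)$ intervals each of which is mapped by $f^{-1}$ onto an interval in $X$.
   Context: For $X=\{x_1<\dots<x_n\}$ and $Y=\{y_1<\dots<y_n\}$, the permutation $\pi\in S_n$ order-isomorphic to a bijection $f:X\to Y$ is defined by $\pi(i)=j\Leftrightarrow f(x_i)=y_j$. An interval in $X$ is a set $\{x_i,x_{i+1},\dots,x_j\}$ with $1\le i\le j\le n$; for sets $A<B$ means $a<b$ for all $a\in A,b\in B$. For $\sigma\in S_n,\tau\in S_m$, $\sigma\oplus\tau\in S_{n+m}$ equals $\sigma(i)$ at $i\le n$ and $n+\tau(i-n)$ at $i>n$; $\sigma\ominus\tau$ equals $m+\sigma(i)$ at $i\le n$ and $\tau(i-n)$ at $i>n$. A permutation is up-indecomposable (down-indecomposable) if it is not $\sigma\oplus\tau$ (not $\sigma\ominus\tau$) with $\sigma,\tau$ nonempty. Every $\pi$ has a unique decomposition $\pi=\sigma_1\oplus\dots\oplus\sigma_r$ into up-indecomposable blocks; $h^+(\pi)$ is the maximum block length; $h^-$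 is defined analogously with $\ominus$. $H_k^+=\{\pi:h^+(\pi)<k\}$, $H_k^-=\{\pi:h^-(\pi)<k\}$. *)

(* Defs.v *)
From mathcomp Require Import all_boot.
Set Implicit Arguments. Unset Strict Implicit. Unset Printing Implicit Defensive.

(* A finite set X = {x_1 < ... < x_n} of naturals is represented by its
   strictly increasing enumeration (a seq nat sorted by ltn).
   Permutations of [n] are represented as words (one-line notation) with
   values 1..n, i.e. pi = [:: pi(1); ...; pi(n)]. *)

Definition is_perm (s : seq nat) : bool := perm_eq s (iota 1 (size s)).

Definition dsum (s t : seq nat) : seq nat := s ++ map (addn (size s)) t.
Definition ssum (s t : seq nat) : seq nat := map (addn (size t)) s ++ t.

Definition up_indecomposable (s : seq nat) : Prop :=
  ~ exists s1 s2, [/\ is_perm s1, is_perm s2, s1 != [::], s2 != [::] & s = dsum s1 s2].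
Definition down_indecomposable (s : seq nat) : Prop :=
  ~ exists s1 s2, [/\ is_perm s1, is_perm s2, s1 != [::], s2 != [::] & s = ssum s1 s2].

Definition up_decomposition (pi : seq nat) (bs : seq (seq nat)) : Prop :=
  [/\ all is_perm bs, all (fun b => b != [::]) bs,
      (forall b, b \in bs -> up_indecomposable b) &
      pi = foldr dsum [::] bs].
Definition down_decomposition (pi : seq nat) (bs : seq (seq nat)) : Prop :=
  [/\ all is_perm bs, all (fun b => b != [::]) bs,
      (forall b, b \in bs -> down_indecomposable b) &
      pi = foldr ssum [::] bs].

(* pi \in H_k^+  <->  h^+(pi) < k, h^+ = max block length of the decomposition *)
Definition in_Hplus (k : nat) (pi : seq nat) : Prop :=
  exists bs, up_decomposition pi bs /\ \max_(b <- bs) size b < k.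
Definition in_Hminus (k : nat) (pi : seq nat) : Prop :=
  exists bs, down_decomposition pi bs /\ \max_(b <- bs) size b < k.

(* The permutation order-isomorphic to f : X -> Y (1-indexed):
   pi(i) = j  <->  f(x_i) = y_j. *)
Definition perm_of (X Y : seq nat) (f : nat -> nat) : seq nat :=
  [seq (index (f x) Y).+1 | x <- X].

Definition is_interval (X A : seq nat) : Prop :=
  exists a b, a < b <= size X /\ perm_eq A (drop a (take b X)).

Definition interval_partition (X : seq nat) (Js : seq (seq nat)) : bool :=
  all (fun J => J != [::]) Js && (flatten Js == X).

Definition refines (Is Js : seq (seq nat)) : Prop :=
  forall I, I \in Is -> exists2 J, J \in Js & {subset I <= J}.

(* Main.v *)
Require Import Defs.
From mathcomp Require Import all_boot zify.

Lemma cat_split (s1 s2 t1 t2 : seq nat) :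
  s1 ++ s2 = t1 ++ t2 -> size s1 = size t1 -> s1 = t1 /\ s2 = t2.
Proof. by move=> /eqP h hs; move: h; rewrite eqseq_cat // => /andP[/eqP-> /eqP->]. Qed.

Lemma interval_mid (W A M C : seq nat) : W = A ++ M ++ C -> M != [::] -> is_interval W M.
Proof.
move=> -> hM; exists (size A), (size A + size M); split.
  have h : 0 < @size nat M by rewrite lt0n size_eq0.
  rewrite !size_cat; apply/andP; split; lia.
by rewrite catA take_size_cat ?size_cat // drop_size_cat.
Qed.

Lemma split_prefix (Bs : seq (seq nat)) : forall J2 R, J2 ++ R = flatten Bs ->
  (exists m, J2 = flatten (take m Bs) /\ R = flatten (drop m Bs)) \/
  (exists Bs1 T U Bs3, [/\ Bs = Bs1 ++ (T ++ U) :: Bs3, T != [::], U != [::],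
      J2 = flatten Bs1 ++ T & R = U ++ flatten Bs3]).
Proof.
elim: Bs => [|B Bs IH] J2 R /=.
  by move=> h; left; exists 0; case: J2 h => //; case: R.
move=> h; case: (leqP (size J2) (size B)) => hs.
  have [e1 e2] : J2 = take (size J2) B /\ R = drop (size J2) B ++ flatten Bs.
    apply: cat_split; first by rewrite h catA cat_take_drop.
    by rewrite size_takel.
  have [h0|h0] := eqVneq J2 [::].
    by left; exists 0; rewrite take0 drop0 /= e2 h0 /= drop0.
  case: (ltnP (size J2) (size B)) => h1.
    right; exists [::], J2, (drop (size J2) B), Bs; split => //.
    - by rewrite /= {1}e1 cat_take_drop.
    - by rewrite -size_eq0 size_drop subn_eq0 -ltnNge h1.
  left; exists 1; rewrite /= take0 drop0 /= ?cats0; split.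
    by rewrite {1}e1 take_oversize.
  by rewrite e2 drop_oversize.
have [e1 e2] : take (size B) J2 = B /\ drop (size B) J2 ++ R = flatten Bs.
  by apply: cat_split; [rewrite catA cat_take_drop | rewrite size_takel // ltnW].
case: (IH _ _ e2) => [[m [h1 h2]] | [Bs1 [T [U [Bs3 [h1 h2 h3 h4 h5]]]]]].
  left; exists m.+1; split => //; by rewrite /= -h1 -{1}e1 cat_take_drop.
right; exists (B :: Bs1), T, U, Bs3; split => //; first by rewrite h1.
by rewrite /= -catA -h4 -{1}e1 cat_take_drop.
Qed.


Definition sing (s : seq nat) : seq (seq nat) := [seq [:: x] | x <- s].

Lemma sing_props (s : seq nat) :
  [/\ all (fun I => I != [::]) (sing s), flatten (sing s) = s, size (sing s) = size s &
      forall I : seq nat, I \in sing s -> exists2 x : nat, x \in s & I = [:: x]].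
Proof.
split; first by apply/allP => I /mapP [x _ ->].
- exact: flatten_seq1.
- exact: size_map.
by move=> I /mapP [x hx ->]; exists x.
Qed.

Definition nz (s : seq nat) : seq (seq nat) := if s == [::] then [::] else [:: s].

Lemma nz_props (s : seq nat) : [/\ flatten (nz s) = s, @size (seq nat) (nz s) <= 1,
  all (fun I => I != [::]) (nz s) & forall I : seq nat, I \in nz s -> I = s /\ s != [::]].
Proof.
rewrite /nz; case: eqP => [->|/eqP h] //=; split => //; first by rewrite cats0.
  by rewrite h.
by move=> I; rewrite inE => /eqP ->.
Qed.

Lemma comb (P : seq nat -> Prop) k : forall (Js : seq (seq nat)) (S : seq nat) (Bs : seq (seq nat)),
  all (fun J => J != [::]) Js -> flatten Js = S ++ flatten Bs ->
  (forall B, B \in Bs -> size B < k) ->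
  (forall x : nat, x \in S ++ flatten Bs -> P [:: x]) ->
  (forall Bs1 Bs2 Bs3, Bs = Bs1 ++ Bs2 ++ Bs3 -> flatten Bs2 != [::] -> P (flatten Bs2)) ->
  exists Is : seq (seq nat), [/\ all (fun I => I != [::]) Is, flatten Is = S ++ flatten Bs, refines Is Js,
     size Is <= size S + size Js + (k-1)*(size Js - 1) & forall I, I \in Is -> P I].
Proof.
elim=> [|J Js IH] S Bs /=.
  by move=> _ e _ _ _; exists [::]; split => // I.
move=> /andP[hJ hJs] e hk hS hB.
case: (leqP (size J) (size S)) => hsz.
  have [e1 e2] : J = take (size J) S /\ flatten Js = drop (size J) S ++ flatten Bs.
    apply: cat_split; first by rewrite e catA cat_take_drop.
    by rewrite size_takel.
  have [|Is' [h1 h2 h3 h4 h5]] := IH _ _ hJs e2 hk _ hB.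
    by move=> x hx; apply: hS; move: hx; rewrite !mem_cat => /orP[/mem_drop->|->] //; rewrite orbT.
  have [s1 s2 s3 s4] := sing_props J.
  exists (sing J ++ Is'); split.
  - by rewrite all_cat s1 h1.
  - by rewrite flatten_cat s2 h2 catA {1}e1 cat_take_drop.
  - move=> I; rewrite mem_cat => /orP[/s4 [x hx ->]|/h3 [J' hJ' sub]].
      by exists J; [rewrite inE eqxx | move=> y; rewrite inE => /eqP->].
    by exists J' => //; rewrite inE hJ' orbT.
  - rewrite size_cat s3 size_drop in h4 *.
    have : (k-1) * (size Js - 1) <= (k-1) * size Js by apply: leq_mul => //; apply: leq_subr.
    lia.
  - move=> I; rewrite mem_cat => /orP[/s4 [x hx ->]|/h5] //.
    by apply: hS; rewrite mem_cat; move: hx; rewrite {1}e1 => /mem_take ->.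
have [e1 e2] : take (size S) J = S /\ drop (size S) J ++ flatten Js = flatten Bs.
  apply: cat_split; [by rewrite catA cat_take_drop -e | by rewrite size_takel // ltnW].
have Jdef : J = S ++ drop (size S) J by rewrite -{1}e1 cat_take_drop.
move: (drop (size S) J) Jdef e2 => J2 Jdef e2; subst J.
have hJ2 : J2 != [::] by case: J2 {e e1 e2 hJ} hsz => //; rewrite cats0 ltnn.
have sub : forall x, x \in flatten Js -> x \in flatten Bs by move=> x hx; rewrite -e2 mem_cat hx orbT.
have hSS : forall x, x \in S -> P [:: x] by move=> x hx; apply: hS; rewrite mem_cat hx.
have hFB : forall x, x \in flatten Bs -> P [:: x] by move=> x hx; apply: hS; rewrite mem_cat hx orbT.
have [sS1 sS2 sS3 sS4] := sing_props S.
have lm : (k-1) * (size Js - 1) <= (k-1) * size Js by apply: leq_mul => //; apply: leq_subr.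
case: (split_prefix _ _ _ e2) => [[m [h1 h2]] | [Bs1 [T [U [Bs3 [h1 h2 h3 h4 h5]]]]]].
  have [|||Is' [i1 i2 i3 i4 i5]] := IH [::] (drop m Bs) hJs h2.
  - by move=> B /mem_drop; exact: hk.
  - by move=> x hx; apply: hFB; apply: sub; rewrite h2.
  - move=> C1 C2 C3 hC; apply: (hB (take m Bs ++ C1) C2 C3).
    by rewrite -catA -hC cat_take_drop.
  exists (sing S ++ J2 :: Is'); split.
  - by rewrite all_cat sS1 /= hJ2 i1.
  - by rewrite flatten_cat sS2 /= i2 h1 /= -flatten_cat cat_take_drop.
  - move=> I; rewrite mem_cat inE => /orP[/sS4 [x hx ->]|/orP[/eqP->|/i3 [J' hJ' sb]]].
    + by exists (S ++ J2); [rewrite inE eqxx | move=> y; rewrite inE => /eqP->; rewrite mem_cat hx].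
    + by exists (S ++ J2); [rewrite inE eqxx | move=> y hy; rewrite mem_cat hy orbT].
    + by exists J'; [rewrite inE hJ' orbT | ].
  - rewrite size_cat /= sS3 in i4 *; lia.
  - move=> I; rewrite mem_cat inE => /orP[/sS4 [x hx ->]|/orP[/eqP->|/i5]] //.
      exact: hSS.
    rewrite h1; apply: (hB [::] (take m Bs) (drop m Bs)); first by rewrite cat_take_drop.
    by rewrite -h1.
have hJs0 : Js != [::].
  apply: (contra_neq _ h3) => E; move: h5; rewrite E /=; by case: U {h1 h4 h3}.
have hJs1 : 0 < size Js by rewrite lt0n size_eq0.
have hTU : T ++ U \in Bs by rewrite h1 mem_cat inE eqxx orbT.
have hkTU := hk _ hTU; rewrite size_cat in hkTU.
have hFl : flatten Bs = flatten Bs1 ++ T ++ U ++ flatten Bs3.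
  by rewrite h1 flatten_cat /= !catA.
have [|||Is' [i1 i2 i3 i4 i5]] := IH U Bs3 hJs h5.
- by move=> B hB3; apply: hk; rewrite h1 mem_cat inE hB3 !orbT.
- by move=> x hx; apply: hFB; apply: sub; rewrite h5.
- move=> C1 C2 C3 hC; apply: (hB (Bs1 ++ (T ++ U) :: C1) C2 C3).
  by rewrite h1 hC -catA.
have [sT1 sT2 sT3 sT4] := sing_props T.
have [ff fs fa fm] := nz_props (flatten Bs1).
exists (sing S ++ nz (flatten Bs1) ++ sing T ++ Is'); split.
- by rewrite !all_cat sS1 sT1 i1 fa.
- by rewrite !flatten_cat sS2 ff sT2 i2 hFl.
- move=> I; rewrite !mem_cat => /orP[/sS4 [x hx ->]|/orP[|/orP[/sT4 [x hx ->]|/i3 [J' hJ' sb]]]].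
  + by exists (S ++ J2); [rewrite inE eqxx | move=> y; rewrite inE => /eqP->; rewrite mem_cat hx].
  + move=> /fm [-> _].
    by exists (S ++ J2); [rewrite inE eqxx | move=> y hy; rewrite mem_cat h4 mem_cat hy !orbT].
  + by exists (S ++ J2); [rewrite inE eqxx | move=> y; rewrite inE => /eqP->; rewrite mem_cat h4 mem_cat hx !orbT].
  + by exists J'; [rewrite inE hJ' orbT | ].
- have : (k-1) * size Js = (k-1)*(size Js - 1) + (k-1) by case: (size Js) hJs1 => // j _; rewrite subSS subn0 mulnSr.
  rewrite !size_cat sS3 sT3 in i4 *. lia.
- move=> I; rewrite !mem_cat => /orP[/sS4 [x hx ->]|/orP[|/orP[/sT4 [x hx ->]|/i5]]] //.
  + exact: hSS.
  + move=> /fm [-> hne].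
    by apply: (hB [::] Bs1 ((T ++ U) :: Bs3)).
  + by apply: hFB; rewrite hFl !mem_cat hx orbT.
Qed.


Lemma seg (X Y : seq nat) (f : nat -> nat) o (b : seq nat) :
  (forall x, x \in X -> f x \in Y) -> perm_of X Y f = map (addn o) b -> is_perm b ->
  o + size b <= size Y -> perm_eq (map f X) (take (size b) (drop o Y)).
Proof.
move=> hfY hpi hb hs.
have e : map f X = map (nth 0 Y) (map predn (perm_of X Y f)).
  rewrite /perm_of -!map_comp; apply/eq_in_map => x hx /=.
  by rewrite nth_index // hfY.
rewrite e hpi -(map_nth_iota 0); last by lia.
apply: perm_map; rewrite -map_comp.
have -> : iota o (size b) = map (predn \o addn o) (iota 1 (size b)).
  rewrite -{1}(addn0 o) iotaDl (iotaDl 1 0) -map_comp; apply: eq_map => i /=; lia.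
exact: perm_map.
Qed.

Lemma mem_fY (X Y : seq nat) (f : nat -> nat) :
  perm_eq (map f X) Y -> forall x, x \in X -> f x \in Y.
Proof. by move=> hp x hx; rewrite -(perm_mem hp) map_f. Qed.

Lemma size_perm_of X Y f : size (perm_of X Y f) = size X.
Proof. exact: size_map. Qed.

Lemma plus_dec (f : nat -> nat) : forall (bs : seq (seq nat)) (X Y : seq nat),
  uniq Y -> perm_eq (map f X) Y -> perm_of X Y f = foldr dsum [::] bs -> all is_perm bs ->
  exists Ps : seq (seq nat * seq nat),
    [/\ X = flatten (unzip1 Ps), Y = flatten (unzip2 Ps),
        map (fun p => size p.1) Ps = map size bs &
        all (fun p => perm_eq (map f p.1) p.2) Ps].
Proof.
elim=> [|b bs IH] X Y hu hp hpi /=.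
  move=> _; exists [::]; move: hpi => /(congr1 size); rewrite size_perm_of /= => /eqP.
  rewrite size_eq0 => /eqP hX; subst X; split => //.
  by move/perm_size: hp => /= /esym/eqP; rewrite size_eq0 => /eqP.
move=> /andP[hb hbs].
set rest := foldr dsum [::] bs in hpi.
have hsz : size X = size b + size rest by rewrite -(size_perm_of X Y f) hpi /= /dsum size_cat size_map.
have hsY : size Y = size X by rewrite -(perm_size hp) size_map.
have hfY := mem_fY _ _ _ hp.
have p1 : perm_of (take (size b) X) Y f = b.
  by rewrite /perm_of map_take -/(perm_of X Y f) hpi /= /dsum take_size_cat.
have p2 : perm_of (drop (size b) X) Y f = map (addn (size b)) rest.
  by rewrite /perm_of map_drop -/(perm_of X Y f) hpi /= /dsum drop_size_cat.
have h1 : perm_eq (map f (take (size b) X)) (take (size b) Y).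
  have := @seg (take (size b) X) Y f 0 b; rewrite drop0; apply => //.
  - by move=> x /mem_take; exact: hfY.
  - by rewrite p1 map_id_in // => x; rewrite add0n.
  - lia.
have h2 : perm_eq (map f (drop (size b) X)) (drop (size b) Y).
  rewrite -(perm_cat2l (take (size b) Y)).
  apply: perm_trans (_ : perm_eq _ (map f X)) _; last by rewrite cat_take_drop.
  by rewrite -{2}(cat_take_drop (size b) X) map_cat perm_cat2r perm_sym.
have hu' := hu; rewrite -(cat_take_drop (size b) Y) cat_uniq in hu'.
case/and3P: hu' => _ hdis hu2.
have p3 : perm_of (drop (size b) X) (drop (size b) Y) f = rest.
  apply: (@inj_map _ _ (addn (size b)) (@addnI (size b))); rewrite -p2 /perm_of -map_comp.
  apply/eq_in_map => x hx /=.
  have hx2 : f x \in drop (size b) Y by rewrite -(perm_mem h2) map_f.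
  have hx1 : f x \notin take (size b) Y.
    by apply: contra hdis => hx1; apply/hasP; exists (f x).
  rewrite -{2}(cat_take_drop (size b) Y) index_cat (negbTE hx1) size_takel; last by rewrite hsY hsz leq_addr.
  by rewrite addnS.
have [Ps' [e1 e2 e3 e4]] := IH _ _ hu2 h2 p3 hbs.
exists ((take (size b) X, take (size b) Y) :: Ps'); split => /=.
- by rewrite -e1 cat_take_drop.
- by rewrite -e2 cat_take_drop.
- by rewrite e3 size_takel //; lia.
- by rewrite h1 e4.
Qed.

Lemma minus_dec (f : nat -> nat) : forall (bs : seq (seq nat)) (X Y : seq nat),
  uniq Y -> perm_eq (map f X) Y -> perm_of X Y f = foldr ssum [::] bs -> all is_perm bs ->
  exists Ps : seq (seq nat * seq nat),
    [/\ X = flatten (unzip1 Ps), Y = flatten (rev (unzip2 Ps)),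
        map (fun p => size p.1) Ps = map size bs &
        all (fun p => perm_eq (map f p.1) p.2) Ps].
Proof.
elim=> [|b bs IH] X Y hu hp hpi /=.
  move=> _; exists [::]; move: hpi => /(congr1 size); rewrite size_perm_of /= => /eqP.
  rewrite size_eq0 => /eqP hX; subst X; split => //.
  by move/perm_size: hp => /= /esym/eqP; rewrite size_eq0 => /eqP.
move=> /andP[hb hbs].
set rest := foldr ssum [::] bs in hpi.
have hsz : size X = size b + size rest by rewrite -(size_perm_of X Y f) hpi /= /ssum size_cat size_map.
have hsY : size Y = size X by rewrite -(perm_size hp) size_map.
have hfY := mem_fY _ _ _ hp.
have p1 : perm_of (take (size b) X) Y f = map (addn (size rest)) b.
  by rewrite /perm_of map_take -/(perm_of X Y f) hpi /= /ssum take_size_cat // size_map.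
have p2 : perm_of (drop (size b) X) Y f = rest.
  by rewrite /perm_of map_drop -/(perm_of X Y f) hpi /= /ssum drop_size_cat // size_map.
have hdY : take (size b) (drop (size rest) Y) = drop (size rest) Y.
  by rewrite take_oversize // size_drop hsY hsz addnK.
have h1 : perm_eq (map f (take (size b) X)) (drop (size rest) Y).
  rewrite -hdY; apply: seg => //.
  - by move=> x /mem_take; exact: hfY.
  - by rewrite hsY hsz addnC.
have h2 : perm_eq (map f (drop (size b) X)) (take (size rest) Y).
  rewrite -(perm_cat2l (drop (size rest) Y)).
  apply: perm_trans (_ : perm_eq _ (map f X)) _.
    by rewrite -{2}(cat_take_drop (size b) X) map_cat perm_cat2r perm_sym.
  by apply: perm_trans hp _; rewrite -{1}(cat_take_drop (size rest) Y) perm_catC.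
have hu' := hu; rewrite -(cat_take_drop (size rest) Y) cat_uniq in hu'.
case/and3P: hu' => hu2 hdis _.
have p3 : perm_of (drop (size b) X) (take (size rest) Y) f = rest.
  rewrite -[in RHS]p2 /perm_of; apply/eq_in_map => x hx /=.
  have hx2 : f x \in take (size rest) Y by rewrite -(perm_mem h2) map_f.
  by rewrite -{2}(cat_take_drop (size rest) Y) index_cat hx2.
have [Ps' [e1 e2 e3 e4]] := IH _ _ hu2 h2 p3 hbs.
exists ((take (size b) X, drop (size rest) Y) :: Ps'); split => /=.
- by rewrite -e1 cat_take_drop.
- by rewrite rev_cons -cats1 flatten_cat -e2 /= cats0 cat_take_drop.
- by rewrite e3 size_takel // hsz leq_addr.
- by rewrite h1 e4.
Qed.


Lemma max_lt (bs : seq (seq nat)) k : \max_(b <- bs) size b < k -> forall b, b \in bs -> size b < k.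
Proof.
elim: bs => [|b0 bs IH] //=; rewrite big_cons gtn_max => /andP[h0 h] b.
by rewrite inE => /orP[/eqP->|/IH]; [| apply].
Qed.

Lemma map_split2 (A B : Type) (g : A -> B) (s : seq A) l1 l2 :
  map g s = l1 ++ l2 -> exists s1 s2, [/\ s = s1 ++ s2, map g s1 = l1 & map g s2 = l2].
Proof.
move=> e; exists (take (size l1) s), (drop (size l1) s); split.
- by rewrite cat_take_drop.
- by rewrite map_take e take_size_cat.
- by rewrite map_drop e drop_size_cat.
Qed.

Lemma map_split3 (A B : Type) (g : A -> B) (s : seq A) l1 l2 l3 :
  map g s = l1 ++ l2 ++ l3 -> exists s1 s2 s3, [/\ s = s1 ++ s2 ++ s3, map g s1 = l1,
     map g s2 = l2 & map g s3 = l3].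
Proof.
move=> /map_split2 [s1 [s' [-> e1 /map_split2 [s2 [s3 [-> e2 e3]]]]]].
by exists s1, s2, s3.
Qed.

Lemma perm_blocks (f : nat -> nat) (Ps : seq (seq nat * seq nat)) :
  all (fun p => perm_eq (map f p.1) p.2) Ps ->
  perm_eq (map f (flatten (unzip1 Ps))) (flatten (unzip2 Ps)).
Proof.
elim: Ps => [|[A B] Ps IH] //= /andP[h1 h2].
by rewrite map_cat; apply: perm_cat => //; apply: IH.
Qed.

Lemma is_interval_perm (W A B : seq nat) : perm_eq A B -> is_interval W A -> is_interval W B.
Proof.
move=> p [a [b [h1 h2]]]; exists a, b; split => //.
by apply: perm_trans h2; rewrite perm_sym.
Qed.

Lemma interval_single (W : seq nat) y : y \in W -> is_interval W [:: y].
Proof. by case/splitPr => p1 p2; exact: (interval_mid (p1 ++ y :: p2) p1 [:: y] p2). Qed.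

Lemma ne_perm (A B : seq nat) : perm_eq A B -> A != [::] -> B != [::].
Proof. by move=> /perm_size h; rewrite -!size_eq0 h. Qed.

Arguments perm_blocks {f Ps}. Arguments is_interval_perm {W A B}. Arguments ne_perm {A B}.

Lemma interval_range (W : seq nat) (rv : bool) (Qs Qs1 Qs2 Qs3 : seq (seq nat)) :
  W = flatten (if rv then rev Qs else Qs) -> Qs = Qs1 ++ Qs2 ++ Qs3 ->
  flatten Qs2 != [::] -> is_interval W (flatten Qs2).
Proof.
move=> hW e hne; case: rv hW => hW.
  have pr : perm_eq (flatten Qs2) (flatten (rev Qs2)).
    by apply: perm_flatten; rewrite perm_sym perm_rev.
  apply: (@is_interval_perm W (flatten (rev Qs2))); first by rewrite perm_sym.
  apply: (interval_mid W (flatten (rev Qs3)) _ (flatten (rev Qs1))).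
    by rewrite hW e !rev_cat !flatten_cat catA.
  exact: ne_perm pr hne.
apply: (interval_mid W (flatten Qs1) _ (flatten Qs3)) => //.
by rewrite hW e !flatten_cat.
Qed.

Lemma main_from_Ps (X Y : seq nat) (f : nat -> nat) (k : nat)
  (Ps : seq (seq nat * seq nat)) (rv : bool) :
  perm_eq (map f X) Y ->
  X = flatten (unzip1 Ps) -> Y = flatten (if rv then rev (unzip2 Ps) else unzip2 Ps) ->
  (forall A, A \in unzip1 Ps -> size A < k) ->
  all (fun p => perm_eq (map f p.1) p.2) Ps ->
  (forall Js, interval_partition X Js ->
     exists Is, [/\ interval_partition X Is, refines Is Js,
                    size Is <= size Js + (k - 1) * (size Js - 1) &
                    forall I, I \in Is -> is_interval Y (map f I)]) /\
  (forall Js, interval_partition Y Js ->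
     exists Is, [/\ interval_partition Y Is, refines Is Js,
                    size Is <= size Js + (k - 1) * (size Js - 1) &
                    forall I, I \in Is ->
                      exists A, is_interval X A /\ perm_eq (map f A) I]).
Proof.
move=> hp hX hY hk1 hall.
have hk2 : forall B, B \in unzip2 Ps -> size B < k.
  move=> B /mapP [p hpP ->]; have := allP hall p hpP => /perm_size.
  rewrite size_map => <-; apply: hk1; exact: map_f.
split.
  move=> Js /andP[hJ /eqP hJX].
  have [||||Is [i1 i2 i3 i4 i5]] :=
    comb (fun I => is_interval Y (map f I)) k Js [::] (unzip1 Ps) hJ _ _ _ _.
  - by rewrite /= hJX.
  - exact: hk1.
  - move=> x hx; have hx' : x \in X by rewrite hX.
    by apply: interval_single; rewrite -(perm_mem hp) map_f.
  - move=> Bs1 Bs2 Bs3 e hne.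
    have [Ps1 [Ps2 [Ps3 [eP _ e2 _]]]] := @map_split3 _ _ _ _ _ _ _ e.
    move: hall; rewrite eP !all_cat => /and3P[_ hall2 _].
    have pm := perm_blocks hall2.
    have pm' : perm_eq (flatten (unzip2 Ps2)) (map f (flatten (unzip1 Ps2))) by rewrite perm_sym.
    rewrite -e2; apply: (is_interval_perm pm').
    apply: (interval_range _ rv (unzip2 Ps) (unzip2 Ps1) _ (unzip2 Ps3) hY).
      by rewrite eP /unzip2 !map_cat.
    by apply: (ne_perm pm); move: hne; rewrite -e2 -!size_eq0 size_map.
  exists Is; split => //.
  - by rewrite /interval_partition i1 i2 hX eqxx.
move=> Js /andP[hJ /eqP hJY].
set Bs := if rv then rev (unzip2 Ps) else unzip2 Ps.
have [||||Is [i1 i2 i3 i4 i5]] :=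
  comb (fun I => exists A, is_interval X A /\ perm_eq (map f A) I) k Js [::] Bs hJ _ _ _ _.
- by rewrite /= hJY.
- by move=> B; rewrite /Bs; case: rv {hY Bs} => [|]; rewrite ?mem_rev; apply: hk2.
- move=> y hy; have : y \in map f X by rewrite (perm_mem hp) hY.
  case/mapP => x hx ->; exists [:: x]; split => //; exact: interval_single.
- move=> Bs1 Bs2 Bs3 e hne.
  have [Ps1 [Ps2 [Ps3 [eP _ e2 _]]]] : exists Ps1 Ps2 Ps3, [/\ Ps = Ps1 ++ Ps2 ++ Ps3,
      True, perm_eq (flatten (unzip2 Ps2)) (flatten Bs2) & True].
    move: e; rewrite /Bs; case: rv {hY Bs} => e.
      have e' : unzip2 Ps = rev Bs3 ++ rev Bs2 ++ rev Bs1.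
        by rewrite -(revK (unzip2 Ps)) e !rev_cat catA.
      have [Ps1 [Ps2 [Ps3 [eP _ e2 _]]]] := @map_split3 _ _ _ _ _ _ _ e'.
      exists Ps1, Ps2, Ps3; split => //; rewrite /unzip2 e2.
      by apply: perm_flatten; rewrite perm_rev.
    have [Ps1 [Ps2 [Ps3 [eP _ e2 _]]]] := @map_split3 _ _ _ _ _ _ _ e.
    by exists Ps1, Ps2, Ps3; split => //; rewrite /unzip2 e2.
  move: hall; rewrite eP !all_cat => /and3P[_ hall2 _].
  have pm := perm_blocks hall2.
  exists (flatten (unzip1 Ps2)); split; last by apply: perm_trans pm e2.
  apply: (interval_range _ false (unzip1 Ps) (unzip1 Ps1) _ (unzip1 Ps3) hX).
    by rewrite eP /unzip1 !map_cat.
  have pm' : perm_eq (flatten Bs2) (map f (flatten (unzip1 Ps2))).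
    by rewrite perm_sym; apply: perm_trans pm e2.
  have := ne_perm pm' hne.
  by rewrite -!size_eq0 size_map.
exists Is; split => //.
- by rewrite /interval_partition i1 i2 -hY eqxx.
Qed.


Lemma hk_of (Ps : seq (seq nat * seq nat)) (bs : seq (seq nat)) k :
  map (fun p => size p.1) Ps = map size bs -> \max_(b <- bs) size b < k ->
  forall A, A \in unzip1 Ps -> size A < k.
Proof.
move=> e3 hmax A hA.
have : size A \in map (fun p => size p.1) Ps by case/mapP: hA => p hp' ->; apply: map_f.
rewrite e3 => /mapP [b hb ->]; exact: max_lt hmax b hb.
Qed.

Theorem mainTheorem4 (X Y : seq nat) (f : nat -> nat) (k : nat) :
  sorted ltn X -> sorted ltn Y -> size X = size Y ->
  {in X &, injective f} -> perm_eq (map f X) Y ->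
  in_Hplus k (perm_of X Y f) \/ in_Hminus k (perm_of X Y f) ->
  (forall Js, interval_partition X Js ->
     exists Is, [/\ interval_partition X Is, refines Is Js,
                    size Is <= size Js + (k - 1) * (size Js - 1) &
                    forall I, I \in Is -> is_interval Y (map f I)]) /\
  (forall Js, interval_partition Y Js ->
     exists Is, [/\ interval_partition Y Is, refines Is Js,
                    size Is <= size Js + (k - 1) * (size Js - 1) &
                    forall I, I \in Is ->
                      exists A, is_interval X A /\ perm_eq (map f A) I]).
Proof.
move=> hXs hYs hsz hinj hp hH.
have hu : uniq Y := sorted_uniq ltn_trans ltnn hYs.
case: hH => [[bs [[hbp hbn hind hpi] hmax]] | [bs [[hbp hbn hind hpi] hmax]]].
  have [Ps [e1 e2 e3 e4]] := plus_dec f bs X Y hu hp hpi hbp.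
  exact: (main_from_Ps X Y f k Ps false hp e1 e2 (hk_of _ _ _ e3 hmax) e4).
have [Ps [e1 e2 e3 e4]] := minus_dec f bs X Y hu hp hpi hbp.
exact: (main_from_Ps X Y f k Ps true hp e1 e2 (hk_of _ _ _ e3 hmax) e4).
Qed.
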